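(* Let $T\subseteq\mathbb{R}^n$ be an action set. Then $\mathbf{T}(\mathbf{W}(T))=T$, where $\mathbf{W}(T)=\bigcap_{t\in T}\mathbf{W}(t)$ and $\mathbf{T}(W)=\bigcap_{w\in W}\mathbf{T}(w)$.
   Context: Single-commodity network pricing setting: $G=(\mathcal{V},\mathcal{A})$ directed graph, arc costs $c\ge0$, nonempty tolled arc set $\mathcal{A}_1\subsetneq\mathcal{A}$, $n=|\mathcal{A}_1|$, $N$ node–arc incidence matrix, single origin $o$ and destination $d$ connected by a toll-free path, $b_o=1$, $b_d=-1$, $b_i=0$ otherwise, $\mathcal{X}=\{x\in\mathbb{R}^{\mathcal{A}}: Nx=b,\ x\ge0\}$, $x_{\mathcal{A}_1}$ the restriction of $x$ to $\mathcal{A}_1$; tolls $t\in\mathbb{R}^n$ are extended by zeros to $\bar t\in\mathbb{R}^{\mathcal{A}}$. Let $f(t)=\min\{c^\top x+t^\top x_{\mathcal{A}_1}: x\in\mathcal{X}\}$ for $t\ge0$, $f(t)=-\infty$ otherwise. An action set is a set $T=\{t:(t,z)\in F\text{ for some }z\}$ where $F$ is a face of $\operatorname{epi}(-f)$ whose affine hull's direction space does not contain $(0,1)$. For $t\ge0$, $\mathbf{W}(t)$ is the set of $w$ such that $(w,x)$ is optimal for some $x$ in $\min_{w,x}\{c^\top x+t^\top w: x_{\mathcal{A}_1}\le w,\ Nx=b,\ w\ge0,\ x\ge0\}$. For $w\in\mathbb{R}^n$, $w\ge0$, $\mathbf{T}(w)$ is the set of $t$ that are parts of optimal solutions $(t,y)$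 of $\max_{t,y}\{b^\top y-w^\top t: N^\top y-\bar t\le c,\ t\ge0\}$. *)

(* Defs.v *)
From HB Require Import structures.
From mathcomp Require Import all_boot all_order all_algebra.
From mathcomp Require Import all_classical all_reals.
From mathcomp Require Import ereal.
Set Implicit Arguments. Unset Strict Implicit. Unset Printing Implicit Defensive.
Import Order.TTheory GRing.Theory Num.Theory.
Local Open Scope ring_scope.
Local Open Scope classical_set_scope.

Section NetworkPricing.
Context (R : realType) (V A : finType).
Context (ends : A -> V * V) (c : A -> R) (A1 : {set A}) (o d : V).

Definition src (a : A) : V := (ends a).1.
Definition tgt (a : A) : V := (ends a).2.

Fixpoint walk (u : V) (p : seq A) (v : V) : bool :=
  match p with
  | [::] => u == v
  | a :: p' => (src a == u) && walk (tgt a) p' v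
  end.

Definition toll_free_path : Prop :=
  exists p : seq A, all (fun a => a \notin A1) p /\ walk o p d.

Definition incid (i : V) (a : A) : R := (src a == i)%:R - (tgt a == i)%:R.
(* right-hand side b: b_o = 1, b_d = -1, 0 otherwise (o != d assumed) *)
Definition bvec (i : V) : R := (i == o)%:R - (i == d)%:R.

Local Notation n := #|A1|.

(* the i-th tolled arc (enumeration of A1 identifies R^{A1} with R^n) *)
Definition tarc (i : 'I_n) : A := enum_val i.

Definition dotA (u v : A -> R) : R := \sum_(a : A) u a * v a.
Definition dotn (u v : 'rV[R]_n) : R := \sum_(i < n) u 0 i * v 0 i.
Definition nonneg (t : 'rV[R]_n) : Prop := forall i, 0 <= t 0 i.

Definition restr (x : A -> R) : 'rV[R]_n := \row_i x (tarc i).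
(* \bar t : extension by zeros of t to all arcs *)
Definition ext (t : 'rV[R]_n) (a : A) : R := \sum_(i < n | tarc i == a) t 0 i.

Definition Xset : set (A -> R) :=
  [set x | (forall i, \sum_(a : A) incid i a * x a = bvec i) /\ forall a, 0 <= x a].

Definition fval (t : 'rV[R]_n) : \bar R :=
  if `[< nonneg t >] then
    ereal_inf [set ((dotA c x + dotn t (restr x))%:E) | x in Xset]
  else -oo%E.

Definition epi_negf : set ('rV[R]_n * R) :=
  [set p | (- fval p.1 <= p.2%:E)%E].

Definition comb (l : R) (p q : 'rV[R]_n * R) : 'rV[R]_n * R :=
  (l *: p.1 + (1 - l) *: q.1, l * p.2 + (1 - l) * q.2).

Definition convex_set (C : set ('rV[R]_n * R)) : Prop :=
  forall p q l, C p -> C q -> 0 <= l <= 1 -> C (comb l p q).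

Definition face (F C : set ('rV[R]_n * R)) : Prop :=
  [/\ F `<=` C, convex_set F &
      forall p q l, C p -> C q -> 0 < l < 1 -> F (comb l p q) -> F p /\ F q].

Definition aff (F : set ('rV[R]_n * R)) : set ('rV[R]_n * R) :=
  [set p | exists (k : nat) (q : 'I_k -> 'rV[R]_n * R) (l : 'I_k -> R),
     [/\ forall i, F (q i), \sum_(i < k) l i = 1 &
         p = (\sum_(i < k) l i *: (q i).1, \sum_(i < k) l i * (q i).2)]].

Definition aff_dir (F : set ('rV[R]_n * R)) : set ('rV[R]_n * R) :=
  [set v | exists p q, [/\ aff F p, aff F q & v = (p.1 - q.1, p.2 - q.2)]].

Definition action_set (T : set 'rV[R]_n) : Prop :=
  exists F, [/\ face F epi_negf, ~ aff_dir F (0, 1) &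
                T = [set t | exists z, F (t, z)]].

Definition primal_feas (w : 'rV[R]_n) (x : A -> R) : Prop :=
  [/\ Xset x, forall i, x (tarc i) <= w 0 i & nonneg w].
Definition primal_opt (t w : 'rV[R]_n) (x : A -> R) : Prop :=
  primal_feas w x /\
  forall w' x', primal_feas w' x' -> dotA c x + dotn t w <= dotA c x' + dotn t w'.
Definition Wof (t : 'rV[R]_n) : set 'rV[R]_n :=
  [set w | exists x, primal_opt t w x].

Definition dual_feas (t : 'rV[R]_n) (y : V -> R) : Prop :=
  (forall a, \sum_(i : V) incid i a * y i - ext t a <= c a) /\ nonneg t.
Definition dual_opt (w t : 'rV[R]_n) (y : V -> R) : Prop :=
  dual_feas t y /\
  forall t' y', dual_feas t' y' ->
    \sum_(i : V) bvec i * y' i - dotn w t' <= \sum_(i : V) bvec i * y i - dotn w t.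
Definition Tof (w : 'rV[R]_n) : set 'rV[R]_n :=
  [set t | exists y, dual_opt w t y].

Definition WofSet (T : set 'rV[R]_n) : set 'rV[R]_n :=
  [set w | forall t, T t -> Wof t w].
Definition TofSet (W : set 'rV[R]_n) : set 'rV[R]_n :=
  [set t | forall w, W w -> Tof w t].

End NetworkPricing.

(* Main.v *)
Require Import Defs.
From HB Require Import structures.
From mathcomp Require Import all_boot all_order all_algebra.
From mathcomp Require Import all_classical all_reals ereal.
From mathcomp Require Import lra ring zify.
Import Order.TTheory GRing.Theory Num.Theory.
Set Implicit Arguments. Unset Strict Implicit. Unset Printing Implicit Defensive.
Local Open Scope ring_scope.
Local Open Scope classical_set_scope.

Section Proof.
Variables (R : realType) (V A : finType) (ends : A -> V * V) (c : A -> R)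
  (A1 : {set A}) (o d : V).
Hypothesis c_ge0 : forall a, 0 <= c a.
Local Notation n := #|A1|.
Local Notation walk := (walk ends).
Local Notation src := (src ends).
Local Notation tgt := (tgt ends).
Local Notation incid := (@incid R V A ends).

Lemma walk_cat u p1 p2 v : walk u (p1 ++ p2) v -> exists m, walk m p2 v.
Proof.
elim: p1 u => [|a p1 IH] u /=; first by move=> h; exists u.
by case/andP=> _ /IH.
Qed.

Lemma walk_short u p v : walk u p v ->
  exists q, [/\ uniq q, walk u q v & {subset q <= p}].
Proof.
elim: p u => [|a p IH] u /=.
  by move=> h; exists [::].
case/andP=> /eqP ha /IH [q [uq wq sq]].
case: (boolP (a \in q)) => aq.
  case/splitPr: aq uq wq sq => q1 q2 uq wq sq.
  have [m /= /andP [_ w2]] := walk_cat wq.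
  exists (a :: q2); split => //=.
  - by move: uq; rewrite cat_uniq => /and3P [_ _].
  - by rewrite ha eqxx.
  - move=> x; rewrite inE => /orP [/eqP -> | xq2]; first by rewrite inE eqxx.
    by rewrite inE sq ?orbT // mem_cat inE xq2 !orbT.
exists (a :: q); split => //=.
- by rewrite aq.
- by rewrite ha eqxx.
- by move=> x; rewrite !inE => /orP [->|/sq ->]; rewrite ?orbT.
Qed.

Lemma incid_sum (y : V -> R) a : \sum_i incid i a * y i = y (src a) - y (tgt a).
Proof.
rewrite /Defs.incid.
under eq_bigr do rewrite mulrBl.
rewrite sumrB.
rewrite (bigD1 (src a)) //= eqxx mul1r big1 ?addr0; last first.
  by move=> i /negbTE; rewrite eq_sym => ->; rewrite mul0r.
rewrite (bigD1 (tgt a)) //= eqxx mul1r big1 ?addr0 //.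
by move=> i /negbTE; rewrite eq_sym => ->; rewrite mul0r.
Qed.

Lemma bvec_sum (y : V -> R) : \sum_i @bvec R V o d i * y i = y o - y d.
Proof.
rewrite /bvec.
under eq_bigr do rewrite mulrBl.
rewrite sumrB.
rewrite (bigD1 o) //= eqxx mul1r big1 ?addr0; last first.
  by move=> i /negbTE ->; rewrite mul0r.
rewrite (bigD1 d) //= eqxx mul1r big1 ?addr0 //.
by move=> i /negbTE ->; rewrite mul0r.
Qed.

Lemma walk_flow u p v : walk u p v -> forall i,
  \sum_(a <- p) incid i a = (i == u)%:R - (i == v)%:R.
Proof.
elim: p u => [|a p IH] u /=.
  by move=> /eqP -> i; rewrite big_nil subrr.
case/andP=> /eqP ha w i; rewrite big_cons (IH _ w) /Defs.incid ha.
rewrite /Defs.src /Defs.tgt in ha *; rewrite [(ends a).2 == i]eq_sym [u == i]eq_sym.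
by rewrite addrA subrK.
Qed.

Local Notation ext := (@ext R A A1).
Local Notation tarc := (@tarc A A1).
Local Notation restr := (@restr R A A1).
Local Notation dotn := (@dotn R A A1).
Local Notation Xset := (@Xset R V A ends o d).

Definition phi (t : 'rV[R]_n) (x : A -> R) := dotA c x + dotn t (restr x).

Lemma ext_dot t (x : A -> R) : \sum_a x a * ext t a = dotn t (restr x).
Proof.
rewrite /Defs.ext /Defs.dotn /Defs.restr.
under eq_bigr do rewrite mulr_sumr big_mkcond /=.
rewrite exchange_big /=; apply: eq_bigr => i _.
rewrite mxE (bigD1 (tarc i)) //= eqxx big1 ?addr0; first by rewrite mulrC.
by move=> a /negbTE; rewrite eq_sym => ->.
Qed.

Lemma phi_ext t x : phi t x = \sum_a x a * (c a + ext t a).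
Proof.
rewrite /phi -ext_dot /dotA -big_split /=; apply: eq_bigr => a _.
by rewrite mulrDr mulrC.
Qed.

Lemma weak_dual t (y : V -> R) x :
  (forall a, \sum_i incid i a * y i - ext t a <= c a) -> Xset x ->
  \sum_i @bvec R V o d i * y i <= phi t x.
Proof.
move=> hy [hx hx0].
have -> : \sum_i @bvec R V o d i * y i = \sum_a x a * (\sum_i incid i a * y i).
  under eq_bigr do rewrite -hx mulr_suml.
  rewrite exchange_big /=; apply: eq_bigr => a _.
  by rewrite mulr_sumr; apply: eq_bigr => i _; rewrite mulrAC mulrC.
rewrite phi_ext; apply: ler_sum => a _; apply: ler_wpM2l => //.
by rewrite -lerBlDr.
Qed.

Definition isPath u (S : {set A}) :=
  exists q, [/\ uniq q, walk u q d & S = [set a in q]].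
Definition chi (S : {set A}) (a : A) : R := (a \in S)%:R.
Definition L (S : {set A}) t := phi t (chi S).
Definition M t := phi t (fun _ => 1).
Definition dist t u := \big[Order.min/M t]_(S : {set A} | `[< isPath u S >]) L S t.

Lemma ext_ge0 t a : nonneg t -> 0 <= ext t a.
Proof. by move=> ht; apply: sumr_ge0 => i _; apply: ht. Qed.

Lemma phi_mono t x x' : nonneg t -> (forall a, x a <= x' a) -> phi t x <= phi t x'.
Proof.
move=> ht hx; rewrite !phi_ext; apply: ler_sum => a _.
by apply: ler_wpM2r => //; rewrite addr_ge0 // ext_ge0.
Qed.

Lemma phiD t x1 x2 : phi t (fun a => x1 a + x2 a) = phi t x1 + phi t x2.
Proof. by rewrite !phi_ext -big_split /=; apply: eq_bigr => a _; rewrite mulrDl. Qed.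

Lemma phi_delta t a : phi t (fun b => (b == a)%:R) = c a + ext t a.
Proof.
rewrite phi_ext (bigD1 a) //= eqxx mul1r big1 ?addr0 //.
by move=> b /negbTE ->; rewrite mul0r.
Qed.

Lemma chi_ge0 S a : 0 <= chi S a.
Proof. by rewrite /chi ler0n. Qed.

Lemma L_ge0 S t : nonneg t -> 0 <= L S t.
Proof.
move=> ht; rewrite /L phi_ext; apply: sumr_ge0 => a _.
by rewrite mulr_ge0 ?chi_ge0 // addr_ge0 // ext_ge0.
Qed.

Lemma L_le_M S t : nonneg t -> L S t <= M t.
Proof. by move=> ht; apply: phi_mono => // a; rewrite /chi; case: (a \in S). Qed.

Lemma dist_le t u S : isPath u S -> dist t u <= L S t.
Proof.
move=> hS; rewrite /dist (bigD1 S) /=; last by apply/asboolP.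
by rewrite ge_min lexx.
Qed.

Lemma min_cases (x y : R) : Order.min x y = x \/ Order.min x y = y.
Proof. by rewrite /Order.min; case: ifP; [left|right]. Qed.

Lemma dist_cases t u : dist t u = M t \/ exists S, isPath u S /\ dist t u = L S t.
Proof.
rewrite /dist; apply: (big_ind (fun v => v = M t \/ exists S, isPath u S /\ v = L S t)).
- by left.
- move=> x y hx hy; case: (min_cases x y) => ->; by [].
- by move=> S /asboolP hS; right; exists S.
Qed.


Lemma dist_leM t u : nonneg t -> dist t u <= M t.
Proof.
move=> ht; rewrite /dist; apply: (big_ind (fun v => v <= M t)) => //.
- by move=> x y hx _; rewrite ge_min hx.
- by move=> S _; apply: L_le_M.
Qed.

Lemma dist_ge0 t u : nonneg t -> 0 <= dist t u.
Proof.
move=> ht; rewrite /dist; apply: (big_ind (fun v => 0 <= v)).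
- by rewrite /M phi_ext; apply: sumr_ge0 => a _; rewrite mul1r addr_ge0 // ext_ge0.
- by move=> x y hx hy; rewrite le_min hx hy.
- by move=> S _; apply: L_ge0.
Qed.

Lemma dist_attain t u S0 : nonneg t -> isPath u S0 ->
  exists S, isPath u S /\ dist t u = L S t.
Proof.
move=> ht h0; case: (dist_cases t u) => // hM.
exists S0; split => //; apply/le_anti; rewrite dist_le //=.
by rewrite hM L_le_M.
Qed.

Lemma isPath_d : isPath d finset.set0.
Proof. by exists [::]; split => //=; apply/setP => a; rewrite !inE. Qed.

Lemma dist_d t : nonneg t -> dist t d = 0.
Proof.
move=> ht; apply/le_anti; rewrite dist_ge0 // andbT.
have := dist_le t isPath_d; rewrite /L /phi.
suff -> : dotA c (chi finset.set0) + dotn t (restr (chi finset.set0)) = 0 by [].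
rewrite /dotA /Defs.dotn big1 ?add0r; last by move=> a _; rewrite /chi inE mulr0.
by rewrite big1 // => i _; rewrite mxE /chi inE mulr0.
Qed.

Lemma short_path u p : walk u p d -> exists S, isPath u S /\
  forall a, a \in S -> a \in p.
Proof.
case/walk_short => q [uq wq sq]; exists [set a in q]; split.
  by exists q.
by move=> a; rewrite inE => /sq.
Qed.

Lemma potential t a : nonneg t -> dist t (src a) <= (c a + ext t a) + dist t (tgt a).
Proof.
move=> ht; case: (dist_cases t (tgt a)) => [->|[S [[q [uq wq ->]] ->]]].
  by apply: ler_wpDl; [rewrite addr_ge0 // ext_ge0 | exact: dist_leM].
have w : walk (src a) (a :: q) d by rewrite /= eqxx.
case: (short_path w) => S' [hS' sub].
apply: (le_trans (dist_le _ hS')).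
rewrite -phi_delta /L -phiD; apply: phi_mono => // b.
rewrite /chi inE -natrD ler_nat.
have := sub b; rewrite inE.
by case: (b \in S'); case: (b == a); case: (b \in q) => //= h; move: (h isT).
Qed.

Lemma pot_feas t : nonneg t -> forall a, \sum_i incid i a * dist t i - ext t a <= c a.
Proof.
move=> ht a; rewrite incid_sum; have := potential a ht; lra.
Qed.

Lemma chi_X S : isPath o S -> Xset (chi S).
Proof.
case=> q [uq wq ->]; split => [i|a]; last by apply: chi_ge0.
rewrite /bvec -(walk_flow wq i) [RHS]big_uniq //.
rewrite [RHS]big_mkcond /=; apply: eq_bigr => a _.
by rewrite /chi inE; case: (a \in q); rewrite ?mulr1 ?mulr0.
Qed.

Hypothesis Htf : toll_free_path ends A1 o d.

Lemma path_o : exists S, isPath o S.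
Proof. by case: Htf => p [_ w]; case: (short_path w) => S [hS _]; exists S. Qed.

Definition g t := dist t o.

Lemma g_attain t : nonneg t -> exists S, isPath o S /\ g t = L S t.
Proof. by move=> ht; case: path_o => S0 h0; exact: (dist_attain ht h0). Qed.

Lemma g_lower t x : nonneg t -> Xset x -> g t <= phi t x.
Proof.
move=> ht hx; have := weak_dual (pot_feas ht) hx.
by rewrite bvec_sum dist_d // subr0.
Qed.

Lemma dual_le t y : nonneg t ->
  (forall a, \sum_i incid i a * y i - ext t a <= c a) ->
  \sum_i @bvec R V o d i * y i <= g t.
Proof.
move=> ht hy; case: (g_attain ht) => S [hS ->].
exact: weak_dual hy (chi_X hS).
Qed.

Lemma fval_g t : nonneg t -> @fval R V A ends c A1 o d t = (g t)%:E.
Proof.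
move=> ht; rewrite /fval; have -> : `[< nonneg t >] = true by apply/asboolP.
apply/le_anti; apply/andP; split.
  apply: ge_ereal_inf; case: (g_attain ht) => S [hS ->].
  exists (L S t)%:E => //; exists (chi S) => //; exact: chi_X.
apply/ereal_infP => _ [x hx <-]; rewrite lee_fin; exact: g_lower.
Qed.

Lemma epiP t z : @epi_negf R V A ends c A1 o d (t, z) <-> nonneg t /\ - g t <= z.
Proof.
rewrite /epi_negf /=; case: (pselect (nonneg t)) => ht.
  by rewrite fval_g // -EFinN lee_fin; split; [move=> h; split|case].
rewrite /fval; have -> : `[< nonneg t >] = false by apply/asboolP.
by split => // -[].
Qed.

Local Notation epi := (@epi_negf R V A ends c A1 o d).

Lemma comb_same l (t : 'rV[R]_n) : l *: t + (1 - l) *: t = t.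
Proof. by rewrite -scalerDl addrC subrK scale1r. Qed.

Lemma aff1 (F : set ('rV[R]_n * R)) p : F p -> aff F p.
Proof.
move=> hp; exists 1%N, (fun _ => p), (fun _ => 1); split => //.
  by rewrite big_ord1.
by rewrite !big_ord1 scale1r mul1r; case: p {hp}.
Qed.

Variable F : set ('rV[R]_n * R).
Hypothesis Hface : face F epi.
Hypothesis Hnv : ~ aff_dir F (0, 1).

Lemma onF t z : F (t, z) -> nonneg t /\ z = - g t.
Proof.
case: Hface => sub conv fext hF.
have [ht hz] := (epiP t z).1 (sub _ hF).
split => //; apply/eqP; rewrite eq_le hz andbT leNgt; apply/negP => hlt.
set l := (z + g t + 1)^-1.
have hd : 0 < z + g t by lra.
have hl0 : 0 < l by rewrite invr_gt0; lra.
have hl1 : l < 1 by rewrite invf_lt1; lra.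
have Cp : epi (t, - g t) by apply/epiP; split.
have Cr : epi (t, z + 1) by apply/epiP; split => //; lra.
have [Fp Fr] : F (t, - g t) /\ F (t, z + 1).
  apply: (fext _ _ l Cp Cr); first by rewrite hl0 hl1.
  rewrite /comb /= comb_same.
  suff -> : l * - g t + (1 - l) * (z + 1) = z by [].
  have e : l * (z + g t + 1) = 1 by rewrite mulVf //; lra.
  lra.
have Fq : F (t, - g t + 1).
  have := conv _ _ (1 - l) Fp Fr.
  rewrite /comb /= comb_same.
  have -> : (1 - l) * - g t + (1 - (1 - l)) * (z + 1) = - g t + 1.
    have e : l * (z + g t + 1) = 1 by rewrite mulVf //; lra.
    lra.
  by apply; apply/andP; split; lra.
apply: Hnv; exists (t, - g t + 1), (t, - g t); split; try exact: aff1.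
by rewrite /= subrr; congr (_, _); lra.
Qed.

Lemma dotn_comb a b (t1 t2 w : 'rV[R]_n) :
  dotn (a *: t1 + b *: t2) w = a * dotn t1 w + b * dotn t2 w.
Proof.
rewrite /Defs.dotn !mulr_sumr -big_split /=; apply: eq_bigr => i _; rewrite !mxE.
ring.
Qed.

Lemma dotnC (u v : 'rV[R]_n) : dotn u v = dotn v u.
Proof. by apply: eq_bigr => i _; rewrite mulrC. Qed.

Lemma dotnD (t u v : 'rV[R]_n) : dotn t (u + v) = dotn t u + dotn t v.
Proof. by rewrite /Defs.dotn -big_split; apply: eq_bigr => i _; rewrite mxE mulrDr. Qed.

Lemma L_aff S a b t1 t2 : a + b = 1 ->
  L S (a *: t1 + b *: t2) = a * L S t1 + b * L S t2.
Proof.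
move=> hab; rewrite /L /phi dotn_comb.
rewrite -{1}[dotA c (chi S)]mul1r -hab; ring.
Qed.

Lemma eps_mono (e e0 al be : R) : 0 < e -> e <= e0 -> 0 <= al -> e0 * be <= al ->
  e * be <= al.
Proof.
move=> he hle hal h; case: (lerP 0 be) => hb.
  by apply: (le_trans _ h); apply: ler_wpM2r.
by apply: (le_trans _ hal); rewrite pmulr_rle0 // ltW.
Qed.

Lemma eps_exists (I : finType) (P : I -> Prop) (al be : I -> R) :
  (forall j, P j -> 0 <= al j) -> (forall j, P j -> al j = 0 -> be j <= 0) ->
  exists e, 0 < e /\ forall j, P j -> e * be j <= al j.
Proof.
move=> hal hbe.
suff [e [he H]] : exists e, 0 < e /\ forall j, j \in enum I -> P j -> e * be j <= al j.
  by exists e; split => // j; apply: H; rewrite mem_enum.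
elim: (enum I) => [|j s [e0 [he0 IH]]].
  by exists 1; split.
case: (pselect (P j /\ 0 < al j)) => [[pj hj]|hn].
  set e1 := al j / (`|be j| + 1).
  have he1 : 0 < e1 by rewrite divr_gt0 // ltr_wpDl.
  exists (Order.min e0 e1); split; first by rewrite lt_min he0 he1.
  move=> k; rewrite inE => /orP [/eqP ->|ks] pk.
    have h1 : Order.min e0 e1 <= e1 by rewrite ge_min lexx orbT.
    have h2 : e1 * (`|be j| + 1) = al j.
      by rewrite /e1 -mulrA mulVf ?mulr1 // gt_eqF // ltr_wpDl.
    have h3 : be j <= `|be j| by apply: ler_norm.
    have h4 : 0 < Order.min e0 e1 by rewrite lt_min he0 he1.
    have h5 : Order.min e0 e1 * (`|be j| + 1) <= e1 * (`|be j| + 1).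
      by apply: ler_wpM2r => //; rewrite addr_ge0.
    have h6 : Order.min e0 e1 * be j <= Order.min e0 e1 * `|be j|.
      by apply: ler_wpM2l => //; apply: ltW.
    rewrite mulrDr mulr1 in h5; nra.
  apply: (eps_mono (e0 := e0)); rewrite ?lt_min ?he0 ?he1 ?ge_min ?lexx //.
    exact: hal.
  exact: IH.
exists e0; split => // k; rewrite inE => /orP [/eqP ->|ks] pk; last exact: IH.
have h0 := hal _ pk.
have : al j = 0.
  by apply/eqP; rewrite eq_le h0 andbT leNgt; apply/negP => hlt; apply: hn.
move=> e; have hb := hbe _ pk e; rewrite e.
by rewrite pmulr_rle0.
Qed.

Definition Tset := [set t | exists z, F (t, z)].
Definition Opt t := [set S : {set A} | `[< isPath o S >] && (L S t == g t)]%SET.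
Definition zeros (t : 'rV[R]_n) := [set i : 'I_n | t 0 i == 0]%SET.
Definition kk t := (#|Opt t| + #|zeros t|)%N.

Lemma T_nonneg t : Tset t -> nonneg t.
Proof. by case=> z /onF []. Qed.

Lemma T_F t : Tset t -> F (t, - g t).
Proof. by case=> z hz; have [_ e] := onF hz; rewrite -e. Qed.

Lemma T_mid t1 t2 l : Tset t1 -> Tset t2 -> 0 <= l <= 1 ->
  Tset (l *: t1 + (1 - l) *: t2) /\
  g (l *: t1 + (1 - l) *: t2) = l * g t1 + (1 - l) * g t2.
Proof.
move=> h1 h2 hl; case: Hface => _ conv _.
have := conv _ _ l (T_F h1) (T_F h2) hl; rewrite /comb /= => hF.
have [_ e] := onF hF; split; first by exists (l * - g t1 + (1 - l) * - g t2).
lra.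
Qed.

Lemma OptP S t : reflect (isPath o S /\ L S t = g t) (S \in Opt t).
Proof.
rewrite inE; apply: (iffP andP) => [[/asboolP h /eqP e]|[h e]]; split => //.
  by apply/asboolP.
by rewrite e.
Qed.

Lemma star_exists : (exists t0, Tset t0) -> exists ts, Tset ts /\
  forall t', Tset t' -> Opt ts \subset Opt t' /\ zeros ts \subset zeros t'.
Proof.
move=> [t0 h0].
pose P m := `[< exists t, Tset t /\ kk t = m >].
have exP : exists m, P m by exists (kk t0); apply/asboolP; exists t0.
case: (ex_minnP exP) => m /asboolP [ts [hts hk]] hmin.
exists ts; split => // t' ht'.
have hl1 : (0 : R) <= 1/2 by lra.
have hl2 : (1/2 : R) <= 1 by lra.
have := @T_mid ts t' (1/2) hts ht'; rewrite hl1 hl2 => /(_ isT) [htm hg].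
set tm := _ *: ts + _ *: t' in htm hg.
have hkm : (m <= kk tm)%N by apply: hmin; apply/asboolP; exists tm.
have n1 := T_nonneg hts; have n2 := T_nonneg ht'.
have s1 : Opt tm \subset Opt ts :&: Opt t'.
  apply/fintype.subsetP => S /OptP [p e]; rewrite finset.in_setI.
  rewrite /tm L_aff in e; last by lra.
  rewrite hg in e.
  have d1 := dist_le ts p; have d2 := dist_le t' p.
  rewrite /g in e; apply/andP; split; apply/OptP; split => //; rewrite /g; lra.
have s2 : zeros tm \subset zeros ts :&: zeros t'.
  apply/fintype.subsetP => i; rewrite !inE /tm !mxE => /eqP e.
  have := n1 i; have := n2 i => a b.
  by apply/andP; split; apply/eqP; lra.
have c1 := subset_leq_card s1; have c2 := subset_leq_card s2.
have c3 : (#|Opt ts :&: Opt t'| <= #|Opt ts|)%N by apply/subset_leq_card/subsetIl.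
have c4 : (#|zeros ts :&: zeros t'| <= #|zeros ts|)%N by apply/subset_leq_card/subsetIl.
move: hkm; rewrite -hk /kk => hkm.
have e1 : Opt ts :&: Opt t' == Opt ts.
  rewrite eqEcard subsetIl /=; move: hkm c1 c2 c3 c4.
  move: #|Opt ts| #|Opt tm| #|Opt ts :&: Opt t'| #|zeros ts| #|zeros tm| #|zeros ts :&: zeros t'| => a1 a2 a3 b1 b2 b3; lia.
have e2 : zeros ts :&: zeros t' == zeros ts.
  rewrite eqEcard subsetIl /=; move: hkm c1 c2 c3 c4.
  move: #|Opt ts| #|Opt tm| #|Opt ts :&: Opt t'| #|zeros ts| #|zeros tm| #|zeros ts :&: zeros t'| => a1 a2 a3 b1 b2 b3; lia.
by rewrite -(eqP e1) -(eqP e2) !subsetIr.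
Qed.

Section Star.
Variable ts : 'rV[R]_n.
Hypothesis hts : Tset ts.
Hypothesis hstar : forall t', Tset t' -> Opt ts \subset Opt t' /\ zeros ts \subset zeros t'.

Definition lam : R := (#|Opt ts|%:R)^-1.
Definition xw (a : A) : R := lam * \sum_(S in Opt ts) chi S a.
Definition zr : 'rV[R]_n := \row_i ((i \in zeros ts)%:R).
Definition ww : 'rV[R]_n := restr xw + zr.

Lemma Q_gt0 : (0 < #|Opt ts|)%N.
Proof.
have [S [hS e]] := g_attain (T_nonneg hts).
by apply/card_gt0P; exists S; apply/OptP.
Qed.

Lemma lam_card : lam * #|Opt ts|%:R = 1.
Proof. by rewrite /lam mulVf // pnatr_eq0 -lt0n Q_gt0. Qed.

Lemma lam_gt0 : 0 < lam.
Proof. by rewrite /lam invr_gt0 ltr0n Q_gt0. Qed.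

Lemma phi_xw t : phi t xw = lam * \sum_(S in Opt ts) L S t.
Proof.
rewrite phi_ext mulr_sumr /L.
under [RHS]eq_bigr do rewrite phi_ext mulr_sumr.
rewrite [RHS]exchange_big /=; apply: eq_bigr => a _.
rewrite /xw -mulrA mulr_suml mulr_sumr; apply: eq_bigr => S _.
by rewrite mulrA.
Qed.

Lemma sum_const_Q (v : R) : lam * \sum_(S in Opt ts) v = v.
Proof. by rewrite sumr_const -mulr_natl mulrA lam_card mul1r. Qed.

Lemma phi_xw_T t' : Tset t' -> phi t' xw = g t'.
Proof.
move=> ht'; rewrite phi_xw -[RHS](sum_const_Q (g t')); congr (_ * _).
apply: eq_bigr => S hS.
have [sub _] := hstar ht'.
by have /OptP [] := fintype.subsetP sub _ hS.
Qed.

Lemma xw_X : Xset xw.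
Proof.
split => [i|a]; last first.
  by rewrite /xw mulr_ge0 ?(ltW lam_gt0) // sumr_ge0 // => S _; apply: chi_ge0.
rewrite -[RHS](sum_const_Q (@bvec R V o d i)) /xw.
under eq_bigr do rewrite mulrCA mulr_sumr.
rewrite -mulr_sumr exchange_big /=; congr (_ * _); apply: eq_bigr => S hS.
have /OptP [p _] := hS; have [hX _] := chi_X p.
by rewrite -(hX i); apply: eq_bigr => a _; rewrite mulrC.
Qed.

Lemma zr_T t' : Tset t' -> dotn t' zr = 0.
Proof.
move=> ht'; have [_ sub] := hstar ht'.
rewrite /Defs.dotn big1 // => i _; rewrite mxE.
case: (boolP (i \in zeros ts)) => hi; last by rewrite mulr0.
by move: (fintype.subsetP sub _ hi); rewrite inE => /eqP ->; rewrite mul0r.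
Qed.

Lemma zr_ge0 t : nonneg t -> 0 <= dotn t zr.
Proof. by move=> ht; apply: sumr_ge0 => i _; rewrite mxE mulr_ge0 ?ler0n. Qed.

Lemma restr_le t x (w : 'rV[R]_n) : nonneg t -> (forall i, x (tarc i) <= w 0 i) ->
  dotn t (restr x) <= dotn t w.
Proof.
move=> ht h; apply: ler_sum => i _; rewrite mxE; apply: ler_wpM2l => //; exact: h.
Qed.

Lemma W_ok t' : Tset t' -> @Wof R V A ends c A1 o d t' ww.
Proof.
move=> ht'; have n' := T_nonneg ht'.
exists xw; split.
  split; first exact: xw_X.
    by move=> i; rewrite /ww !mxE lerDl ler0n.
  move=> i; rewrite /ww !mxE addr_ge0 ?ler0n //.
  by have [_ h] := xw_X; apply: h.
move=> w' x' [hX hle hw].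
rewrite /ww dotnD zr_T // addr0.
have -> : dotA c xw + dotn t' (restr xw) = g t' by rewrite -phi_xw_T.
apply: (le_trans (g_lower n' hX)); rewrite /phi lerD2l.
exact: restr_le.
Qed.

Lemma T_ok t : @Tof R V A ends c A1 o d ww t -> Tset t.
Proof.
move=> [y [[hfeas ht] hopt]].
have nts := T_nonneg hts.
have H := hopt ts (dist ts) (conj (pot_feas nts) nts).
rewrite bvec_sum dist_d // subr0 in H.
have hy := dual_le ht hfeas.
rewrite !(dotnC ww) /ww !dotnD zr_T // addr0 in H.
have e1 := phi_xw_T hts; rewrite /phi in e1.
have key : phi t xw + dotn t zr <= g t by rewrite /phi /g in e1 hy *; lra.
set D := \sum_(S in Opt ts) (L S t - g t).
have eD : phi t xw = lam * D + g t.
  by rewrite phi_xw /D sumrB mulrBr sum_const_Q subrK.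
have hD0 : 0 <= D.
  apply: sumr_ge0 => S /OptP [p _]; rewrite subr_ge0; exact: dist_le.
have hlD : 0 <= lam * D by rewrite mulr_ge0 // ltW // lam_gt0.
have hz := zr_ge0 ht.
have hlD0 : lam * D = 0 by lra.
have hz0 : dotn t zr = 0 by lra.
have D0 : D = 0.
  by apply/eqP; move/eqP: hlD0; rewrite mulf_eq0 (gt_eqF lam_gt0).
have optQ : forall S, S \in Opt ts -> L S t = g t.
  move=> S hS; apply/eqP; rewrite -subr_eq0; apply/eqP.
  move: S hS; apply: psumr_eq0P => // S /OptP [p _]; rewrite subr_ge0; exact: dist_le.
have zQ : forall i, i \in zeros ts -> t 0 i = 0.
  move=> i hi.
  have hnn : forall j, xpredT j -> 0 <= t 0 j * zr 0 j.
    by move=> j _; rewrite mxE mulr_ge0 ?ler0n.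
  have := @psumr_eq0P _ _ _ _ hnn hz0 i isT.
  by rewrite mxE hi mulr1.
have hb1 : forall i : 'I_n, True -> ts 0 i = 0 -> t 0 i - ts 0 i <= 0.
  move=> i _ e0; rewrite e0 zQ ?subr0 //; by rewrite inE e0.
have [ep1 [hep1 H1]] := @eps_exists 'I_n (fun _ => True) (fun i => ts 0 i)
   (fun i => t 0 i - ts 0 i) (fun i _ => nts i) hb1.
have ha2 : forall S, isPath o S -> 0 <= L S ts - g ts.
  by move=> S p; rewrite subr_ge0; exact: dist_le.
have hb2 : forall S, isPath o S -> L S ts - g ts = 0 -> L S t - g t <= 0.
  move=> S p e0; rewrite optQ ?subrr //; apply/OptP; split => //; lra.
have [ep2 [hep2 H2]] := @eps_exists {set A} (fun S => isPath o S)
   (fun S => L S ts - g ts) (fun S => L S t - g t) ha2 hb2.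
set e := Order.min ep1 ep2.
have he : 0 < e by rewrite lt_min hep1 hep2.
have He1 : forall i, e * (t 0 i - ts 0 i) <= ts 0 i.
  move=> i; have := H1 i I; have := nts i; rewrite /= => a b.
  have hle : e <= ep1 by rewrite ge_min lexx.
  exact: (eps_mono he hle a b).
have He2 : forall S, isPath o S -> e * (L S t - g t) <= L S ts - g ts.
  move=> S p; have := H2 S p; have := ha2 S p; rewrite /= => a b.
  have hle : e <= ep2 by rewrite ge_min lexx orbT.
  exact: (eps_mono he hle a b).
set u := (1 + e) *: ts + (- e) *: t.
have hab : (1 + e) + - e = 1 by ring.
have nu : nonneg u.
  move=> i; rewrite /u !mxE; have := He1 i; nra.
have hgu : g u = (1 + e) * g ts - e * g t.
  apply/le_anti/andP; split.
    have [S0 hS0] : exists S0, S0 \in Opt ts by apply/card_gt0P; exact: Q_gt0.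
    have /OptP [p0 e0] := hS0.
    apply: (le_trans (dist_le u p0)); rewrite /u L_aff // e0 optQ //.
    by rewrite mulNr.
  have [S' [p' ->]] := g_attain nu.
  rewrite /u L_aff //.
  have := He2 _ p'; have := dist_le ts p'; rewrite /g; nra.
set l := (1 + e)^-1.
have h1e : 1 + e != 0 by rewrite gt_eqF //; lra.
have hl0 : 0 < l by rewrite invr_gt0; lra.
have hl1 : l < 1 by rewrite invf_lt1; lra.
have Cu : epi (u, - g u) by apply/epiP; split.
have Ct : epi (t, - g t) by apply/epiP; split.
have E : comb l (u, - g u) (t, - g t) = (ts, - g ts).
  rewrite /comb /=; congr (_, _).
    apply/rowP => i; rewrite /u !mxE /l; field => //.
  rewrite hgu /l; field => //.
case: Hface => _ _ fext.
have [_ Ft] := fext _ _ l Cu Ct (introT andP (conj hl0 hl1)) (eq_ind_r F (T_F hts) E).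
by exists (- g t).
Qed.

End Star.

Local Notation Wof := (@Wof R V A ends c A1 o d).
Local Notation Tof := (@Tof R V A ends c A1 o d).

Lemma easy_dir t : Tset t -> TofSet ends c o d (WofSet ends c o d Tset) t.
Proof.
move=> hT w hW.
have [x [[hX hle hw] hopt]] := hW t hT.
have nt := T_nonneg hT.
exists (dist t); split; first by split => //; exact: pot_feas.
move=> t' y' [hf' ht'].
have h1 := weak_dual hf' hX.
have h2 := restr_le ht' hle.
have [S [p e]] := g_attain nt.
have feas : primal_feas ends o d (restr (chi S)) (chi S).
  split; first exact: chi_X.
    by move=> i; rewrite mxE.
  by move=> i; rewrite mxE chi_ge0.
have h3 := hopt _ _ feas.
rewrite (bvec_sum (dist t)) dist_d // subr0 (dotnC w t') (dotnC w t).
change (dist t o) with (g t).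
rewrite /phi in h1; rewrite /L /phi in e; lra.
Qed.

Lemma empty_dir t : (0 < n)%N -> ~ (exists t0, Tset t0) ->
  ~ TofSet ends c o d (WofSet ends c o d Tset) t.
Proof.
move=> n0 hne hT.
pose w : 'rV[R]_n := const_mx (-1).
have [y [[hf ht] hopt]] : Tof w t.
  by apply: hT => t' ht'; exfalso; apply: hne; exists t'.
pose t1 : 'rV[R]_n := t + const_mx 1.
have hf1 : dual_feas ends c t1 y.
  split.
    move=> a; apply: le_trans (hf a); apply: lerB => //; rewrite /t1 /Defs.ext.
    apply: ler_sum => i _; rewrite !mxE lerDl; exact: ler01.
  by move=> i; rewrite /t1 !mxE addr_ge0.
have := hopt _ _ hf1; rewrite /t1 dotnD.
have -> : dotn w (const_mx 1) = - (n%:R).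
  rewrite /Defs.dotn (eq_bigr (fun => - 1)); last by move=> i _; rewrite !mxE mulr1.
  by rewrite sumrN sumr_const card_ord.
have : (0 : R) < n%:R by rewrite ltr0n.
lra.
Qed.

End Proof.

Theorem proposition3 (R : realType) (V A : finType) (ends : A -> V * V)
  (c : A -> R) (A1 : {set A}) (o d : V) (T : set 'rV[R]_#|A1|) :
  injective ends ->
  (forall a, 0 <= c a) ->
  A1 != finset.set0 -> A1 \proper finset.setTfor A ->
  o != d ->
  toll_free_path ends A1 o d ->
  @action_set R V A ends c A1 o d T ->
  @TofSet R V A ends c A1 o d (@WofSet R V A ends c A1 o d T) = T.
Proof.
move=> _ c0 A1ne _ _ Htf [F [Hf Hnv ->]].
change [set t | exists z, F (t, z)] with (Tset F).
apply/seteqP; split => t; last exact: (easy_dir c0 Htf Hf Hnv).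
move=> hT.
case: (pselect (exists t0, Tset F t0)) => hne; last first.
  have n0 : (0 < #|A1|)%N by rewrite card_gt0.
  by case: (empty_dir n0 hne hT).
have [ts [hts hstar]] := star_exists c0 Htf Hf Hnv hne.
apply: (T_ok c0 Htf Hf Hnv hts hstar).
apply: hT => t' ht'; exact: (W_ok c0 Htf Hf Hnv hts hstar).
Qed.
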